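(* Let $\mathcal A\in\mathbb C^{n_1\times n_2\times n_3}$ and let $\mathcal A^{-,\dagger}$ be a fixed element of $\mathcal A\{-,\dagger\}$. Then $$\mathcal A\{-,\dagger\}=\left\{\mathcal A^{-,\dagger}+(\mathcal I-\mathcal A^{-,\dagger}\mathcal A)\mathcal W\mathcal A\mathcal A^{-,\dagger}\ :\ \mathcal W\in\mathbb C^{n_2\times n_1\times n_3}\right\}.$$
   Context: Fix a nonsingular matrix $M\in\mathbb C^{n_3\times n_3}$. For $\mathcal C\in\mathbb C^{n_1\times n_2\times n_3}$ let $\widehat{\mathcal C}=\mathcal C\times_3M$, i.e. $\widehat{\mathcal C}_{ijk}=\sum_{l=1}^{n_3}M_{kl}\mathcal C_{ijl}$, and let $\widehat{\mathcal C}^{(i)}$ denote its $i$-th frontal slice. The M-product $\mathcal C\star_M\mathcal D$ of $\mathcal C\in\mathbb C^{n_1\times n_2\times n_3}$ and $\mathcal D\in\mathbb C^{n_2\times l\times n_3}$ is the unique tensor with $\widehat{\mathcal C\star_M\mathcal D}^{(i)}=\widehat{\mathcal C}^{(i)}\widehat{\mathcal D}^{(i)}$ for all $i\in[n_3]$. Juxtaposition of tensors denotes the M-product. The identity tensor $\mathcal I\in\mathbb C^{n\times n\times n_3}$ is defined by $\widehat{\mathcal I}^{(i)}=I_n$ for all $i$. The conjugate transpose $\mathcal A^*$ is defined by $\widehat{\mathcal A^*}^{(i)}=(\widehat{\mathcal A}^{(i)})^*$. The Moore–Penrose inverse $\mathcal A^\dagger$ is the unique $\mathcal W$ satisfying (1)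 $\mathcal A\mathcal W\mathcal A=\mathcal A$, (2) $\mathcal W\mathcal A\mathcal W=\mathcal W$, (3) $(\mathcal A\mathcal W)^*=\mathcal A\mathcal W$, (4) $(\mathcal W\mathcal A)^*=\mathcal W\mathcal A$. $\mathcal A\{1\}$ is the set of all $\mathcal W$ satisfying (1). The set of 1-MP inverses is $\mathcal A\{-,\dagger\}=\{\mathcal A^-\mathcal A\mathcal A^\dagger:\mathcal A^-\in\mathcal A\{1\}\}$. *)

(* Defs.v *)
From HB Require Import structures.
From mathcomp Require Import all_boot all_order all_algebra.
From mathcomp Require Import complex.
From mathcomp Require Import reals.
Set Implicit Arguments. Unset Strict Implicit. Unset Printing Implicit Defensive.
Import Order.TTheory GRing.Theory Num.Theory.
Local Open Scope ring_scope.

Section Tensors.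
Variable R : realType.
Local Notation C := R[i].

(* A tensor in C^{n1 x n2 x n3}, stored by frontal slices: (T k) i j = T_{ijk}. *)
Definition tensor (n1 n2 n3 : nat) := {ffun 'I_n3 -> 'M[C]_(n1, n2)}.

Variable n3 : nat.
Variable M : 'M[C]_n3.

(* hat T = T x_3 M : (hat T)^{(k)} = \sum_l M_{kl} T^{(l)} *)
Definition thats n1 n2 (T : tensor n1 n2 n3) : tensor n1 n2 n3 :=
  [ffun k => \sum_l M k l *: T l].

(* inverse mode-3 transform: the unique tensor whose hat has the given slices
   (M is assumed nonsingular where used). *)
Definition tunhat n1 n2 (S : tensor n1 n2 n3) : tensor n1 n2 n3 :=
  [ffun l => \sum_k (invmx M) l k *: S k].

Definition tprod n1 n2 l (A : tensor n1 n2 n3) (B : tensor n2 l n3) : tensor n1 l n3 :=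
  tunhat [ffun k => thats A k *m thats B k].

Definition tid n : tensor n n n3 := tunhat [ffun _ => 1%:M].

Definition tconjT n1 n2 (A : tensor n1 n2 n3) : tensor n2 n1 n3 :=
  tunhat [ffun k => map_mx (@conjc R) (thats A k)^T].

Definition is_MP n1 n2 (A : tensor n1 n2 n3) (W : tensor n2 n1 n3) : Prop :=
  [/\ tprod (tprod A W) A = A,
      tprod (tprod W A) W = W,
      tconjT (tprod A W) = tprod A W &
      tconjT (tprod W A) = tprod W A].

Definition is_inner_inv n1 n2 (A : tensor n1 n2 n3) (W : tensor n2 n1 n3) : Prop :=
  tprod (tprod A W) A = A.

Definition is_one_MP n1 n2 (A : tensor n1 n2 n3) (X : tensor n2 n1 n3) : Prop :=
  exists G : tensor n2 n1 n3, exists P : tensor n2 n1 n3,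
    [/\ is_inner_inv A G, is_MP A P & X = tprod (tprod G A) P].

End Tensors.

(* Main.v *)
Require Import Defs.
From HB Require Import structures.
From mathcomp Require Import all_boot all_order all_algebra.
From mathcomp Require Import complex.
From mathcomp Require Import reals.
Import GRing.Theory Num.Theory.
Local Open Scope ring_scope.

Section Aux.
Local Set Implicit Arguments.
Variable R : realType.
Local Notation C := R[i].
Variable n3 : nat.
Variable M : 'M[C]_n3.
Hypothesis HM : M \in unitmx.

Lemma thatsK n1 n2 (S : tensor R n1 n2 n3) k : thats M (tunhat M S) k = S k.
Proof.
rewrite ffunE.
under eq_bigr => l _ do rewrite ffunE scaler_sumr.
rewrite exchange_big /=.
under eq_bigr => j _ do (under eq_bigr => l _ do rewrite scalerA; rewrite -scaler_suml).
rewrite (bigD1 k) //= [X in _ + X]big1 ?addr0.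
  have := f_equal (fun X : 'M[C]_n3 => X k k) (mulmxV HM); rewrite !mxE eqxx /= => ->.
  by rewrite scale1r.
move=> j /negPf njk.
have := f_equal (fun X : 'M[C]_n3 => X k j) (mulmxV HM); rewrite !mxE eq_sym njk /= => ->.
by rewrite scale0r.
Qed.

Lemma tunhatK n1 n2 (T : tensor R n1 n2 n3) : tunhat M (thats M T) = T.
Proof.
apply/ffunP => k; rewrite ffunE.
under eq_bigr => l _ do rewrite ffunE scaler_sumr.
rewrite exchange_big /=.
under eq_bigr => j _ do (under eq_bigr => l _ do rewrite scalerA; rewrite -scaler_suml).
rewrite (bigD1 k) //= [X in _ + X]big1 ?addr0.
  have := f_equal (fun X : 'M[C]_n3 => X k k) (mulVmx HM); rewrite !mxE eqxx /= => ->.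
  by rewrite scale1r.
move=> j /negPf njk.
have := f_equal (fun X : 'M[C]_n3 => X k j) (mulVmx HM); rewrite !mxE eq_sym njk /= => ->.
by rewrite scale0r.
Qed.

Lemma teqP n1 n2 (T U : tensor R n1 n2 n3) :
  (forall k, thats M T k = thats M U k) -> T = U.
Proof.
move=> H; rewrite -(tunhatK T) -(tunhatK U); congr (tunhat M _).
by apply/ffunP.
Qed.

Lemma thats_prod n1 n2 l (A : tensor R n1 n2 n3) (B : tensor R n2 l n3) k :
  thats M (tprod M A B) k = thats M A k *m thats M B k.
Proof. by rewrite thatsK ffunE. Qed.

Lemma thats_add n1 n2 (A B : tensor R n1 n2 n3) k :
  thats M (A + B) k = thats M A k + thats M B k.
Proof.
rewrite !ffunE -big_split /=; apply: eq_bigr => l _.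
by rewrite ffunE scalerDr.
Qed.

Lemma thats_sub n1 n2 (A B : tensor R n1 n2 n3) k :
  thats M (A - B) k = thats M A k - thats M B k.
Proof.
rewrite !ffunE -sumrB /=; apply: eq_bigr => l _.
by rewrite !ffunE scalerBr.
Qed.

Lemma thats_id n k : thats M (tid M n) k = 1%:M.
Proof. by rewrite thatsK ffunE. Qed.

Definition star n1 n2 (X : 'M[C]_(n1, n2)) : 'M[C]_(n2, n1) := map_mx (@conjc R) X^T.

Lemma starM n1 n2 n (X : 'M[C]_(n1, n2)) (Y : 'M[C]_(n2, n)) :
  star (X *m Y) = star Y *m star X.
Proof. by rewrite /star trmx_mul map_mxM. Qed.

Lemma thats_conj n1 n2 (A : tensor R n1 n2 n3) k :
  thats M (tconjT M A) k = star (thats M A k).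
Proof. by rewrite thatsK ffunE. Qed.

Lemma slice_rhs n1 n2 (X0 W : tensor R n2 n1 n3) (A : tensor R n1 n2 n3) k :
  thats M (X0 + tprod M (tprod M (tprod M (tid M n2 - tprod M X0 A) W) A) X0) k =
  thats M X0 k + (1%:M - thats M X0 k *m thats M A k) *m thats M W k
     *m thats M A k *m thats M X0 k.
Proof.
by rewrite thats_add !thats_prod thats_sub thats_id thats_prod.
Qed.

Lemma slice_3 n1 n2 m (G : tensor R n2 n1 n3) (A : tensor R n1 m n3) (P : tensor R m n1 n3) k :
  thats M (tprod M (tprod M G A) P) k = thats M G k *m thats M A k *m thats M P k.
Proof. by rewrite !thats_prod. Qed.

End Aux.
Arguments star {R n1 n2}.
Opaque tprod tid.

Lemma mp_unique (R : realType) n1 n2 (a : 'M[R[i]]_(n1, n2)) p p' :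
  a *m p *m a = a -> star (a *m p) = a *m p ->
  a *m p' *m a = a -> star (a *m p') = a *m p' -> a *m p = a *m p'.
Proof.
move=> h1 h3 h1' h3'.
have -> : a *m p = (a *m p') *m (a *m p) by rewrite mulmxA h1'.
by rewrite -h3' -h3 -starM mulmxA h1 h3'.
Qed.

Lemma dir1 (K : comUnitRingType) n1 n2 (a : 'M[K]_(n1, n2)) g0 p g p' :
  a *m g0 *m a = a -> a *m p *m a = a -> a *m g *m a = a -> a *m p = a *m p' ->
  g *m a *m p' = g0 *m a *m p +
    (1%:M - g0 *m a *m p *m a) *m g *m a *m (g0 *m a *m p).
Proof.
move=> hg0 hp hg e.
have ax0 : a *m (g0 *m a *m p) = a *m p by rewrite !mulmxA hg0.
have x0a : g0 *m a *m p *m a = g0 *m a by rewrite -!mulmxA (mulmxA a p) hp.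
rewrite x0a -[_ *m a *m (g0 *m a *m p)]mulmxA ax0 !mulmxBl mul1mx.
rewrite -[g0 *m a *m g *m (a *m p)]mulmxA -[g0 *m a *m (g *m (a *m p))]mulmxA.
rewrite (mulmxA a g) (mulmxA (a *m g)) hg.
by rewrite (mulmxA g0 a p) subrKC e mulmxA.
Qed.

Lemma dir2a (K : comUnitRingType) n1 n2 (a : 'M[K]_(n1, n2)) g0 p w :
  a *m g0 *m a = a ->
  a *m (g0 + (1%:M - g0 *m a) *m w *m a *m p) *m a = a.
Proof.
move=> hg0.
have z : a *m (1%:M - g0 *m a) = 0 by rewrite mulmxBr mulmx1 mulmxA hg0 subrr.
by rewrite mulmxDr mulmxDl hg0 !mulmxA z !mul0mx addr0.
Qed.

Lemma dir2b (K : comUnitRingType) n1 n2 (a : 'M[K]_(n1, n2)) g0 p w :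
  a *m g0 *m a = a -> a *m p *m a = a ->
  (g0 + (1%:M - g0 *m a) *m w *m a *m p) *m a *m p = g0 *m a *m p +
    (1%:M - g0 *m a *m p *m a) *m w *m a *m (g0 *m a *m p).
Proof.
move=> hg0 hp.
have ax0 : a *m (g0 *m a *m p) = a *m p by rewrite !mulmxA hg0.
have x0a : g0 *m a *m p *m a = g0 *m a by rewrite -!mulmxA (mulmxA a p) hp.
rewrite x0a -[_ *m a *m (g0 *m a *m p)]mulmxA ax0 mulmxDl mulmxDl; congr (_ + _).
by rewrite -!mulmxA (mulmxA a p (a *m p)) (mulmxA (a *m p) a p) hp.
Qed.

Lemma dir1' (K : comUnitRingType) n1 n2 (a : 'M[K]_(n1, n2)) g0 p g p' x0 :
  a *m g0 *m a = a -> a *m p *m a = a -> a *m g *m a = a -> a *m p = a *m p' ->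
  x0 = g0 *m a *m p ->
  g *m a *m p' = x0 + (1%:M - x0 *m a) *m g *m a *m x0.
Proof. by move=> ? ? ? ? ->; apply: dir1. Qed.

Lemma dir2a' (K : comUnitRingType) n1 n2 (a : 'M[K]_(n1, n2)) g0 p w g :
  a *m g0 *m a = a -> g = g0 + (1%:M - g0 *m a) *m w *m a *m p ->
  a *m g *m a = a.
Proof. by move=> ? ->; apply: dir2a. Qed.

Lemma dir2b' (K : comUnitRingType) n1 n2 (a : 'M[K]_(n1, n2)) g0 p w g x0 :
  a *m g0 *m a = a -> a *m p *m a = a ->
  g = g0 + (1%:M - g0 *m a) *m w *m a *m p -> x0 = g0 *m a *m p ->
  g *m a *m p = x0 + (1%:M - x0 *m a) *m w *m a *m x0.
Proof. by move=> ? ? -> ->; apply: dir2b. Qed.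

Theorem theorem3p2 (R : realType) (n1 n2 n3 : nat) (M : 'M[R[i]]_n3)
  (HM : M \in unitmx) (A : tensor R n1 n2 n3) (X0 : tensor R n2 n1 n3)
  (HX0 : is_one_MP M A X0) :
  forall X : tensor R n2 n1 n3,
    is_one_MP M A X <->
    exists W : tensor R n2 n1 n3,
      X = X0 + tprod M (tprod M (tprod M (tid M n2 - tprod M X0 A) W) A) X0.
Proof.
case: HX0 => G0 [P [hG0 [hP1 hP2 hP3 hP4] ->]] X.
have sG0 k : thats M A k *m thats M G0 k *m thats M A k = thats M A k.
  by have := congr1 (fun T => thats M T k) hG0; rewrite !(thats_prod M HM).
have sP1 k : thats M A k *m thats M P k *m thats M A k = thats M A k.
  by have := congr1 (fun T => thats M T k) hP1; rewrite !(thats_prod M HM).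
have sP3 k : star (thats M A k *m thats M P k) = thats M A k *m thats M P k.
  by have := congr1 (fun T => thats M T k) hP3; rewrite (thats_conj M HM) !(thats_prod M HM).
split.
- case=> G [P' [hG [hQ1 _ hQ3 _] ->]].
  exists G; apply: (teqP M HM) => k.
  have sG k' : thats M A k' *m thats M G k' *m thats M A k' = thats M A k'.
    by have := congr1 (fun T => thats M T k') hG; rewrite !(thats_prod M HM).
  have e : thats M A k *m thats M P k = thats M A k *m thats M P' k.
    apply: mp_unique => //.
    - by have := congr1 (fun T => thats M T k) hQ1; rewrite !(thats_prod M HM).
    - by have := congr1 (fun T => thats M T k) hQ3; rewrite (thats_conj M HM) !(thats_prod M HM).
  apply: (etrans (slice_3 M HM G A P' k)).
  apply: (etrans _ (esym (slice_rhs M HM _ _ _ k))).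
  apply: dir1'.
  - exact: sG0.
  - exact: sP1.
  - exact: sG.
  - exact: e.
  - exact: (slice_3 M HM G0 A P k).
- case=> W ->.
  pose Gs := [ffun k => thats M G0 k + (1%:M - thats M G0 k *m thats M A k)
                *m thats M W k *m thats M A k *m thats M P k].
  exists (tunhat M Gs), P; split.
  + apply: (teqP M HM) => k.
    apply: (etrans (slice_3 M HM A (tunhat M Gs) A k)).
    apply: dir2a'.
    * exact: sG0.
    * by rewrite (thatsK M HM) ffunE.
  + by split.
  + apply: esym; apply: (teqP M HM) => k.
    apply: (etrans (slice_3 M HM (tunhat M Gs) A P k)).
    apply: (etrans _ (esym (slice_rhs M HM _ _ _ k))).
    apply: dir2b'.
    * exact: sG0.
    * exact: sP1.
    * by rewrite (thatsK M HM) ffunE.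
    * exact: (slice_3 M HM G0 A P k).
Qed.
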